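(* For every positive integer $t$ and every finite graph $G$ of cliquewidth at most $t$, the hypergraph of balls in $G$ has a proper array sample compression scheme of size $4t+3$.
   Context: For a hypergraph $H$ (finite $V(H)$, $E(H)\subseteq 2^{V(H)}$): a sample is a pair $(X^+,X^-)$ of subsets of $V(H)$ such that some hyperedge $e$ has $X^+\subseteq e$, $X^-\cap e=\emptyset$; $\mathcal{S}(H)$ is the set of samples; $S$ realizes $(X^+,X^-)$ if $X^+\subseteq S$ and $S\cap X^-=\emptyset$. With a fresh symbol $\bot\notin V(H)$, an array sample compression scheme of size $k$ is a pair $(\kappa,\rho)$, $\kappa:\mathcal{S}(H)\to(V(H)\cup\{\bot\})^k$, $\rho:(V(H)\cup\{\bot\})^k\to 2^{V(H)}$, such that for every sample, $\kappa(X^+,X^-)\in(X^+\cup X^-\cup\{\bot\})^k$ and $\rho(\kappa(X^+,X^-))$ realizes $(X^+,X^-)$; it is proper if all values of $\rho$ are hyperedges. The hypergraph of balls in $G$ has vertex set $V(G)$ and hyperedges all $B_G(c,r)=\{v:\mathrm{dist}_G(c,v)\le r\}$, $c\in V(G)$, $r$ an integer. The cliquewidth of $G$ is the minimum $k$ such that $G$ can be built with labels in $[k]$ using: creation of a single labeled vertex; disjoint union; for labels $i\ne j$, adding all edges between label-$i$ and label-$j$ vertices; relabeling label $i$ to $j$. *)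

(* Defs.v *)
From mathcomp Require Import all_boot all_order all_algebra.
Set Implicit Arguments. Unset Strict Implicit. Unset Printing Implicit Defensive.

(* A hypergraph on the finite vertex type T is given by its hyperedge
   predicate E : {set T} -> Prop. *)

Section Hypergraphs.
Variable T : finType.

Definition is_sample (E : {set T} -> Prop) (Xp Xm : {set T}) : Prop :=
  exists B, E B /\ Xp \subset B /\ [disjoint Xm & B].

Definition realizes (S Xp Xm : {set T}) : bool :=
  (Xp \subset S) && [disjoint S & Xm].

(* an array sample compression scheme of size k; [None] plays the role of
   the fresh symbol bot. kappa is given as a function on all pairs; only its
   values on samples matter. *)
Definition is_ASCS (E : {set T} -> Prop) (k : nat)
    (kappa : {set T} -> {set T} -> k.-tuple (option T))
    (rho : k.-tuple (option T) -> {set T}) : Prop :=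
  forall Xp Xm, is_sample E Xp Xm ->
    (forall o, o \in kappa Xp Xm ->
        match o with None => true | Some x => (x \in Xp) || (x \in Xm) end)
    /\ realizes (rho (kappa Xp Xm)) Xp Xm.

Definition is_proper (E : {set T} -> Prop) (k : nat)
    (rho : k.-tuple (option T) -> {set T}) : Prop :=
  forall w, E (rho w).

Definition has_proper_ASCS (E : {set T} -> Prop) (k : nat) : Prop :=
  exists kappa rho, is_ASCS E kappa rho /\ @is_proper E k rho.

End Hypergraphs.

Section Graphs.
Variable T : finType.
Variable e : rel T.  (* simple graph: symmetric, irreflexive (assumed in the theorem) *)

Fixpoint reach (c : T) (n : nat) : {set T} :=
  match n with
  | 0 => [set c]
  | n'.+1 => reach c n' :|: [set v | [exists u in reach c n', e u v]]
  end.

Definition ball (c : T) (r : int) : {set T} :=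
  match r with
  | Posz n => reach c n
  | Negz _ => set0
  end.

Definition is_ball (B : {set T}) : Prop := exists c (r : int), B = ball c r.

End Graphs.

(* k-expressions; vertices of the built graph are named by elements of T *)
Inductive cwexp (T : Type) (k : nat) : Type :=
| CVtx of T & 'I_k
| CUnion of cwexp T k & cwexp T k
| CJoin of 'I_k & 'I_k & cwexp T k
| CRelab of 'I_k & 'I_k & cwexp T k.

Section CW.
Variables (T : finType) (k : nat).

Fixpoint cw_verts (x : cwexp T k) : seq T :=
  match x with
  | CVtx v _ => [:: v]
  | CUnion a b => cw_verts a ++ cw_verts b
  | CJoin _ _ a => cw_verts a
  | CRelab _ _ a => cw_verts a
  end.

Fixpoint cw_lab (x : cwexp T k) (v : T) : option 'I_k :=
  match x with
  | CVtx w l => if v == w then Some l else None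
  | CUnion a b => if v \in cw_verts a then cw_lab a v else cw_lab b v
  | CJoin _ _ a => cw_lab a v
  | CRelab i j a => if cw_lab a v == Some i then Some j else cw_lab a v
  end.

Fixpoint cw_edge (x : cwexp T k) (u v : T) : bool :=
  match x with
  | CVtx _ _ => false
  | CUnion a b => cw_edge a u v || cw_edge b u v
  | CJoin i j a => cw_edge a u v ||
      ((cw_lab a u == Some i) && (cw_lab a v == Some j)) ||
      ((cw_lab a u == Some j) && (cw_lab a v == Some i))
  | CRelab _ _ a => cw_edge a u v
  end.

Fixpoint cw_wf (x : cwexp T k) : bool :=
  match x with
  | CVtx _ _ => true
  | CUnion a b => [&& cw_wf a, cw_wf b & [disjoint cw_verts a & cw_verts b]]
  | CJoin i j a => (i != j) && cw_wf a
  | CRelab _ _ a => cw_wf a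
  end.

Definition cw_builds (x : cwexp T k) (e : rel T) : Prop :=
  [/\ cw_wf x, uniq (cw_verts x), (forall v : T, v \in cw_verts x)
    & forall u v, cw_edge x u v = e u v].

End CW.

Definition cliquewidth_le (T : finType) (e : rel T) (k : nat) : Prop :=
  exists x : cwexp T k, cw_builds x e.

(* Main.v *)
Require Import Defs.
From mathcomp Require Import all_boot all_order all_algebra.
From mathcomp Require Import zify.
From Stdlib Require Import Classical ClassicalEpsilon.
Set Implicit Arguments. Unset Strict Implicit. Unset Printing Implicit Defensive.

Section Reach.
Variables (T : finType) (e : rel T).

Lemma reachP c n v :
  reflect (exists p, [/\ path e c p, last c p = v & size p <= n]) (v \in reach e c n).
Proof.
apply: (iffP idP).
- elim: n v => [|n IH] v /=.
  + by rewrite inE => /eqP ->; exists [::].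
  + rewrite inE => /orP[/IH [p [P1 P2 P3]]|].
    * by exists p; split => //; rewrite leqW.
    * rewrite inE => /existsP [u /andP [/IH [p [P1 P2 P3]] Euv]].
      exists (rcons p v); rewrite rcons_path P1 P2 Euv last_rcons size_rcons; split => //.
- case => p [P1 P2 P3]; elim: n v p P1 P2 P3 => [|n IH] v p P1 P2 P3 /=.
  + by move: P3; rewrite leqn0 => /nilP Hp; subst p; rewrite -P2 inE.
  + case/lastP: p P1 P2 P3 => [|p y] P1 P2 P3.
    * rewrite inE; apply/orP; left; exact: (IH v [::]).
    * rewrite rcons_path in P1; case/andP: P1 => P1 Ey. rewrite last_rcons in P2; subst y.
      rewrite size_rcons ltnS in P3.
      rewrite inE; apply/orP; right; rewrite inE; apply/existsP; exists (last c p).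
      rewrite Ey andbT; exact: (IH _ p).
Qed.

Lemma reach_mono c m n v : m <= n -> v \in reach e c m -> v \in reach e c n.
Proof.
move=> Hmn /reachP [p [P1 P2 P3]]; apply/reachP; exists p; split => //.
exact: leq_trans Hmn.
Qed.

Lemma reach_self c n : c \in reach e c n.
Proof. by apply/reachP; exists [::]. Qed.

Lemma last_rev (x : T) s : last x (rev s) = head x s.
Proof. by case: s => [|a s] //=; rewrite rev_cons last_rcons. Qed.

Lemma reach_sym (Hs : symmetric e) c v n : v \in reach e c n -> c \in reach e v n.
Proof.
case/reachP => p [P1 P2 P3]; apply/reachP.
exists (rev (belast c p)); split.
- rewrite -P2 rev_path; rewrite (@eq_path _ _ e) //; move=> a b /=; exact: Hs.
- by rewrite last_rev; case: p P2 {P1 P3} => [|a p] //= <-.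
- by rewrite size_rev size_belast.
Qed.

End Reach.

Section Split.
Variables (T : finType) (e : rel T) (k : nat) (A : pred T) (lab : T -> option 'I_k).
Hypothesis modA : forall z z' w, A z -> A z' -> lab z = lab z' -> ~~ A w -> e z w = e z' w.
Hypothesis labA : forall z, A z -> lab z != None.

Definition near (l : 'I_k) u n := exists2 z, (A z /\ lab z = Some l) & z \in reach e u n.
Definition far (l : 'I_k) v n := ~~ A v /\ exists z p,
   [/\ A z /\ lab z = Some l, path e z p, last z p = v, size p <= n & all (predC A) p].

Lemma near_mono l u m n : m <= n -> near l u m -> near l u n.
Proof. by move=> H [z Hz Hr]; exists z; [done | exact: reach_mono Hr]. Qed.

Lemma far_mono l u m n : m <= n -> far l u m -> far l u n.
Proof.
move=> H [Hu [z [p [H1 H3 H4 H5 H6]]]]; split => //; exists z, p; split => //.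
exact: leq_trans H.
Qed.

Lemma split_last (u : T) p : (A u || has A p) -> ~~ A (last u p) ->
  exists p1 p2, [/\ p = p1 ++ p2, A (last u p1) & all (predC A) p2].
Proof.
elim: p u => [|x p IH] u /=.
  by rewrite orbF => ->.
move=> H Hl.
case Hh: (A x || has A p).
  case: (IH x Hh Hl) => p1 [p2 [-> H1 H2]].
  by exists (x :: p1), p2.
exists [::], (x :: p); split => //.
  by move: H Hh; case: (A u) => //= ->.
by move: Hh => /norP [Hx Hp] /=; rewrite Hx /=; move: Hp; rewrite -all_predC.
Qed.

Lemma split_reach u v n : A u -> ~~ A v ->
  (v \in reach e u n) <-> exists l m, [/\ m <= n, near l u m & far l v (n - m)].
Proof.
move=> Au Av; split.
- case/reachP => p [P1 P2 P3].
  have [p1 [p2 [Hp H1 H2]]] : exists p1 p2, [/\ p = p1 ++ p2, A (last u p1) & all (predC A) p2].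
    by apply: split_last; [rewrite Au | rewrite P2].
  subst p; set z := last u p1.
  have := labA H1; case Hl: (lab z) => [l|] // _.
  exists l, (size p1); split.
  + by apply: leq_trans P3; rewrite size_cat leq_addr.
  + exists z => //; apply/reachP; exists p1; split => //.
    by move: P1; rewrite cat_path => /andP [].
  + split => //; exists z, p2; split => //.
    * by move: P1; rewrite cat_path => /andP [].
    * by rewrite -P2 last_cat.
    * move: P3; rewrite size_cat; lia.
- case=> l [m [Hm [z [Az Lz] Hz] [_ [z' [p [[Az' Lz'] Pp Lp Sp Ap]]]]]].
  case/reachP: Hz => p1 [Q1 Q2 Q3].
  case: p Pp Lp Sp Ap => [|w p] Pp Lp Sp Ap.
    by move: Av; rewrite -Lp /= Az'.
  apply/reachP; exists (p1 ++ w :: p); split.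
  + rewrite cat_path Q1 Q2 /=.
    move: Pp => /= /andP [Ew ->]; rewrite andbT.
    move: Ap => /= /andP [Aw _].
    by rewrite (modA Az Az') ?Lz ?Lz'.
  + by rewrite last_cat Q2.
  + rewrite size_cat; move: Sp; rewrite leq_subRL // => Sp.
    by apply: leq_trans (leq_add Q3 (leqnn _)) _; rewrite addnC -leq_subRL // ?leq_subRL // ; lia.
Qed.

End Split.

Section Max.
Variables (T : finType) (R : T -> T -> Prop).
Hypothesis Rtot : forall v w, R v w \/ R w v.
Hypothesis Rtrans : forall u v w, R u v -> R v w -> R u w.

Lemma max_opt (P : T -> Prop) : exists o, (forall v, o = Some v -> P v) /\
  (forall v, P v -> exists2 m, o = Some m & R v m).
Proof.
case: (classic (exists v, P v)) => [[v0 Pv0]|H]; last first.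
  by exists None; split => // v Pv; case: H; exists v.
suff: forall s : seq T, (exists v, v \in s /\ P v) ->
    exists m, P m /\ forall v, v \in s -> P v -> R v m.
  move/(_ (enum T)) => [|m [Pm Hm]]; first by exists v0; rewrite mem_enum.
  exists (Some m); split; first by move=> v [<-].
  by move=> v Pv; exists m => //; apply: Hm => //; rewrite mem_enum.
elim => [|a s IH]; first by case=> v [].
move=> H.
case: (classic (exists v, v \in s /\ P v)) => [/IH [m [Pm Hm]]|Hn].
- case: (classic (P a)) => Pa.
  + case: (Rtot a m) => Ham.
    * exists m; split => // v; rewrite inE => /orP [/eqP ->|Hv] //; exact: Hm.
    * exists a; split => // v; rewrite inE => /orP [/eqP ->|Hv] Pv.
        by case: (Rtot a a).
      exact: Rtrans (Hm _ Hv Pv) Ham.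
  + exists m; split => // v; rewrite inE => /orP [/eqP ->|Hv] Pv //; exact: Hm.
- have Pa : P a.
    case: H => v []; rewrite inE => /orP [/eqP -> //|Hv Pv].
    by case: Hn; exists v.
  exists a; split => // v; rewrite inE => /orP [/eqP ->|Hv] Pv.
    by case: (Rtot a a).
  by case: Hn; exists v.
Qed.
End Max.

Section Pre.
Variables (T : finType) (F : T -> nat -> Prop).
Hypothesis Fmono : forall v m n, m <= n -> F v m -> F v n.
Definition ple v w := forall j, F w j -> F v j.

Lemma ple_total v w : ple v w \/ ple w v.
Proof.
case: (classic (ple v w)) => [|H]; [by left|right].
rewrite /ple in H *. move: H => /not_all_ex_not [j0 H0]. case: (imply_to_and _ _ H0) => Fw Fv j Fvj.
have [Hle|Hlt] := leqP j j0.
- by case: Fv; exact: Fmono Hle Fvj.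
- exact: Fmono (ltnW Hlt) Fw.
Qed.

Lemma ple_trans u v w : ple u v -> ple v w -> ple u w.
Proof. by move=> H1 H2 j /H2 /H1. Qed.

Lemma ple_max (P : T -> Prop) : exists o, (forall v, o = Some v -> P v) /\
  (forall v, P v -> exists2 m, o = Some m & ple v m).
Proof. exact: max_opt ple_total ple_trans P. Qed.

Lemma ple_min (P : T -> Prop) : exists o, (forall v, o = Some v -> P v) /\
  (forall v, P v -> exists2 m, o = Some m & ple m v).
Proof.
apply: (@max_opt T (fun v w => ple w v)).
- by move=> v w; case: (ple_total v w); [right|left].
- by move=> u v w H1 H2; exact: ple_trans H2 H1.
Qed.
End Pre.

Section CWP.
Variables (T : finType) (t : nat).
Implicit Types (x y a b : cwexp T t).

Fixpoint subt y x : Prop :=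
  y = x \/ match x with
           | CUnion a b => subt y a \/ subt y b
           | CJoin _ _ a => subt y a
           | CRelab _ _ a => subt y a
           | CVtx _ _ => False end.

Lemma lab_verts x v l : cw_lab x v = Some l -> v \in cw_verts x.
Proof.
elim: x l => [w l'|a IHa b IHb|i j a IH|i j a IH] l /=.
- by case: eqP => // -> _; rewrite inE.
- rewrite mem_cat; case: ifP => [H _|_ /IHb ->]; by rewrite ?H ?orbT.
- exact: IH.
- by case: eqP => [H _|_ H]; exact: IH H.
Qed.

Lemma verts_lab x v : v \in cw_verts x -> exists l, cw_lab x v = Some l.
Proof.
elim: x => [w l'|a IHa b IHb|i j a IH|i j a IH] /=.
- by rewrite inE => /eqP ->; exists l'; rewrite eqxx.
- by rewrite mem_cat; case: ifP => [H _|H /= Hb]; [exact: IHa | exact: IHb].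
- exact: IH.
- by move=> /IH [l Hl]; case: eqP => _; [exists j | exists l].
Qed.

Lemma edge_verts x u v : cw_edge x u v -> (u \in cw_verts x) && (v \in cw_verts x).
Proof.
elim: x => [w l'|a IHa b IHb|i j a IH|i j a IH] //=.
- by rewrite !mem_cat => /orP [/IHa /andP [-> ->]|/IHb /andP [-> ->]]; rewrite ?orbT.
- case/orP => [/orP [/IH //|]|] /andP [/eqP /lab_verts -> /eqP /lab_verts ->] //.
Qed.

Lemma edge_outr x u w : w \notin cw_verts x -> cw_edge x u w = false.
Proof. by move=> Hw; apply/negP => /edge_verts /andP [_]; rewrite (negbTE Hw). Qed.

Lemma edge_outl x u w : u \notin cw_verts x -> cw_edge x u w = false.
Proof. by move=> Hw; apply/negP => /edge_verts /andP []; rewrite (negbTE Hw). Qed.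

Lemma subt_verts y x : subt y x -> {subset cw_verts y <= cw_verts x}.
Proof.
elim: x => [w l'|a IHa b IHb|i j a IH|i j a IH] /= [-> //|H] //.
- by case: H => [/IHa|/IHb] H v /H; rewrite mem_cat => ->; rewrite ?orbT.
- exact: IH.
- exact: IH.
Qed.

Lemma module_refl y z z' : cw_lab y z = cw_lab y z' ->
  cw_lab y z = cw_lab y z' /\ forall w, w \notin cw_verts y -> cw_edge y z w = cw_edge y z' w.
Proof. by move=> Hl; split => // w Hw; rewrite !edge_outr. Qed.

Lemma module x y : cw_wf x -> subt y x -> forall z z', z \in cw_verts y -> z' \in cw_verts y ->
  cw_lab y z = cw_lab y z' ->
  cw_lab x z = cw_lab x z' /\ forall w, w \notin cw_verts y -> cw_edge x z w = cw_edge x z' w.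
Proof.
move=> + + z z' Hz Hz' Hl.
elim: x => [w l'|a IHa b IHb|i j a IH|i j a IH] wf [Hy|H].
all: try (subst y; exact: module_refl).
all: rewrite /=.
- by case: H.
- case/and3P: wf => wa wb dis.
  case: H => H.
  + have Za := subt_verts H Hz; have Za' := subt_verts H Hz'.
    case: (IHa wa H) => L E; rewrite Za Za'; split => // w Hw.
    by rewrite E // !(@edge_outl b) // (disjointFr dis).
  + have Zb := subt_verts H Hz; have Zb' := subt_verts H Hz'.
    case: (IHb wb H) => L E.
    rewrite (disjointFl dis Zb) (disjointFl dis Zb'); split => // w Hw.
    by rewrite E // !(@edge_outl a) // (disjointFl dis).
- case/andP: wf => _ wa; case: (IH wa H) => L E; split => // w Hw.
  by rewrite E // L.
- case: (IH wf H) => L E; split => //; by rewrite L.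
Qed.

Fixpoint lca x (s1 s2 : T) : cwexp T t :=
  match x with
  | CUnion a b => if (s1 \in cw_verts a) && (s2 \in cw_verts a) then lca a s1 s2
                  else if (s1 \in cw_verts b) && (s2 \in cw_verts b) then lca b s1 s2 else x
  | CJoin _ _ a => lca a s1 s2
  | CRelab _ _ a => lca a s1 s2
  | CVtx _ _ => x
  end.

Fixpoint maxsub x (s1 s3 : T) : cwexp T t :=
  if s3 \notin cw_verts x then x else
  match x with
  | CUnion a b => if s1 \in cw_verts a then maxsub a s1 s3 else maxsub b s1 s3
  | CJoin _ _ a => maxsub a s1 s3
  | CRelab _ _ a => maxsub a s1 s3
  | CVtx _ _ => x
  end.

Definition node1 x s1 (o : option T) := if o is Some s3 then maxsub x s1 s3 else x.

Lemma lca_subt x s1 s2 : subt (lca x s1 s2) x.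
Proof.
elim: x => [w l'|a IHa b IHb|i j a IH|i j a IH] /=; try by right.
- by left.
- by case: ifP => _; [right; left | case: ifP => _; [right; right|left]].
Qed.

Lemma maxsub_subt x s1 s3 : subt (maxsub x s1 s3) x.
Proof.
elim: x => [w l'|a IHa b IHb|i j a IH|i j a IH] /=; case: ifP => _; try by left.
all: try by right.
by case: ifP => _; right; [left|right].
Qed.

Lemma subt_refl x : subt x x.
Proof. by case: x => *; left. Qed.

Lemma node1_subt x s1 o : subt (node1 x s1 o) x.
Proof. by case: o => [s|] /=; [exact: maxsub_subt | exact: subt_refl]. Qed.

Lemma lca_set x (S : {set T}) : cw_wf x -> (exists v, v \in S /\ v \in cw_verts x) ->
  exists s1 s2, [/\ s1 \in S, s2 \in S, s1 \in cw_verts x, s2 \in cw_verts x &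
     forall v, v \in S -> v \in cw_verts x -> v \in cw_verts (lca x s1 s2)].
Proof.
elim: x => [w l|a IHa b IHb|i j a IH|i j a IH].
- move=> _ [v [Sv]]; rewrite inE => /eqP Hv; subst v.
  by exists w, w; split => //; rewrite inE.
- rewrite /=; case/and3P => wa wb dis Hex.
  case: (classic (exists v, v \in S /\ v \in cw_verts a)) => Ha;
  case: (classic (exists v, v \in S /\ v \in cw_verts b)) => Hb.
  + case: Ha => s1 [S1 A1]; case: Hb => s2 [S2 B2].
    exists s1, s2; rewrite (disjointFl dis B2) (disjointFr dis A1) /= !mem_cat A1 B2 orbT.
    by split.
  + case: (IHa wa Ha) => s1 [s2 [S1 S2 A1 A2 Hc]].
    exists s1, s2; rewrite A1 A2 /= !mem_cat A1 A2; split => // v Sv.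
    rewrite mem_cat => /orP [|Bv]; first exact: Hc.
    by case: Hb; exists v.
  + case: (IHb wb Hb) => s1 [s2 [S1 S2 B1 B2 Hc]].
    exists s1, s2; rewrite (disjointFl dis B1) B1 B2 /= !mem_cat B1 B2 !orbT; split => // v Sv.
    rewrite mem_cat => /orP [Av|]; last exact: Hc.
    by case: Ha; exists v.
  + case: Hex => v [Sv]; rewrite mem_cat => /orP [] Hv; [case: Ha | case: Hb]; by exists v.
- by rewrite /=; case/andP => _ wa; exact: IH.
- exact: IH.
Qed.

Lemma maxsub_out x s1 s3 : s3 \notin cw_verts x -> maxsub x s1 s3 = x.
Proof. by case: x => [w l|a b|i j a|i j a] /= ->. Qed.

Definition TS x (S : {set T}) c s1 s2 (s3 : option T) :=
 [/\ [/\ s1 \in S, s2 \in S, s1 \in cw_verts x, s2 \in cw_verts x &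
         forall s, s3 = Some s -> (s \in S) && (s \in cw_verts x)],
     c \in cw_verts (node1 x s1 s3), c \notin cw_verts (lca x s1 s2) &
     forall v, v \in S -> v \in cw_verts x ->
       (v \in cw_verts (lca x s1 s2)) || (v \notin cw_verts (node1 x s1 s3))].

Lemma union_step x d o (S : {set T}) c :
  cw_wf d -> cw_wf o -> [disjoint cw_verts d & cw_verts o] ->
  (forall v, (v \in cw_verts x) = (v \in cw_verts d) || (v \in cw_verts o)) ->
  (forall s1 s2, s1 \in cw_verts d -> s2 \in cw_verts d -> lca x s1 s2 = lca d s1 s2) ->
  (forall s1 s2, s1 \in cw_verts o -> s2 \in cw_verts o -> lca x s1 s2 = lca o s1 s2) ->
  (forall s1 s, s1 \in cw_verts d -> s \in cw_verts d -> maxsub x s1 s = maxsub d s1 s) ->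
  (forall s1 s, s1 \in cw_verts d -> s \in cw_verts o -> maxsub x s1 s = d) ->
  (c \in cw_verts d -> (exists v, v \in S /\ v \in cw_verts d) ->
     exists s1 s2 s3, TS d S c s1 s2 s3) ->
  c \in cw_verts d -> c \notin S -> (exists v, v \in S /\ v \in cw_verts x) ->
  exists s1 s2 s3, TS x S c s1 s2 s3.
Proof.
move=> wd wo dis Hx Ld Lo Md Mo IH Cd CS Hex.
have notd v : v \in cw_verts o -> v \notin cw_verts d.
  by move=> Hv; rewrite (disjointFl dis Hv).
have noto v : v \in cw_verts d -> v \notin cw_verts o.
  by move=> Hv; rewrite (disjointFr dis Hv).
have inx v : v \in cw_verts d -> v \in cw_verts x by move=> Hv; rewrite Hx Hv.
have inx' v : v \in cw_verts o -> v \in cw_verts x by move=> Hv; rewrite Hx Hv orbT.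
case: (classic (exists v, v \in S /\ v \in cw_verts d)) => Hd.
- case: (IH Cd Hd) => s1 [s2 [s3 [[S1 S2 D1 D2 H3] G1 G2 G3]]].
  have L : lca x s1 s2 = lca d s1 s2 by apply: Ld.
  have G3' : forall v, v \in S -> v \in cw_verts x ->
       (v \in cw_verts (lca d s1 s2)) || (v \notin cw_verts (node1 d s1 s3)).
    move=> v Sv; rewrite Hx => /orP [Dv|Ov]; first exact: G3.
    apply/orP; right; apply/negP => /(subt_verts (node1_subt _ _ _)) Dv.
    by move: (notd _ Ov); rewrite Dv.
  case: s3 H3 G1 G2 G3 G3' => [s|] H3 G1 G2 G3 G3'.
  + case/andP: (H3 s erefl) => Ss Ds.
    exists s1, s2, (Some s); rewrite /TS L /= Md //.
    split; [split; [exact: S1 | exact: S2 | exact: inx | exact: inx | by move=> s' [<-]; rewrite Ss inx] | exact: G1 | exact: G2 | exact: G3'].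
  + case: (classic (exists v, v \in S /\ v \in cw_verts o)) => Ho.
    * case: Ho => s0 [Ss Os].
      exists s1, s2, (Some s0); rewrite /TS L /= Mo //.
      split; [split; [exact: S1 | exact: S2 | exact: inx | exact: inx | by move=> s' [<-]; rewrite Ss inx'] | exact: G1 | exact: G2 | exact: G3'].
    * exists s1, s2, None; rewrite /TS L /=.
      split; [split; [exact: S1 | exact: S2 | exact: inx | exact: inx | by []] | exact: inx | exact: G2 |].
      move=> v Sv; rewrite Hx => /orP [Dv|Ov]; last by case: Ho; exists v.
      by move: (G3 v Sv Dv); rewrite /= Dv orbF => ->.
- have Ho : exists v, v \in S /\ v \in cw_verts o.
    case: Hex => v [Sv]; rewrite Hx => /orP [Dv|Ov]; last by exists v.
    by case: Hd; exists v.
  case: (lca_set wo Ho) => s1 [s2 [S1 S2 O1 O2 Hc]].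
  exists s1, s2, None; rewrite /TS (Lo _ _ O1 O2) /=.
  split => //; first split => //; try exact: inx'.
  + exact: inx.
  + apply/negP => /(subt_verts (lca_subt _ _ _)) Oc.
    by move: (notd _ Oc); rewrite Cd.
  + move=> v Sv; rewrite Hx => /orP [Dv|Ov]; first by case: Hd; exists v.
    by rewrite Hc.
Qed.

Lemma tree_split x (S : {set T}) c : cw_wf x -> c \in cw_verts x -> c \notin S ->
  (exists v, v \in S /\ v \in cw_verts x) -> exists s1 s2 s3, TS x S c s1 s2 s3.
Proof.
move=> + + CS; elim: x => [w l|a IHa b IHb|i j a IH|i j a IH].
- move=> _; rewrite /= inE => /eqP Hc [v [Sv]]; rewrite inE => /eqP Hv; subst.
  by rewrite Sv in CS.
- rewrite /=; case/and3P => wa wb dis; rewrite mem_cat => /orP [Ca|Cb] Hex.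
  + apply: (union_step (d := a) (o := b)) => //.
    * by move=> v; rewrite mem_cat.
    * by move=> s1 s2 /= -> ->.
    * by move=> s1 s2 /= H1 H2; rewrite (disjointFl dis H1) H1 H2.
    * by move=> s1 s /= H1 H2; rewrite mem_cat H2 H1.
    * move=> s1 s /= H1 H2; rewrite mem_cat H2 orbT H1 /= maxsub_out //.
      by rewrite (disjointFl dis H2).
    * by move=> H1 H2; exact: IHa.
  + rewrite disjoint_sym in dis.
    apply: (union_step (d := b) (o := a)) => //.
    * by move=> v; rewrite mem_cat orbC.
    * by move=> s1 s2 /= H1 H2; rewrite (disjointFr dis H1) H1 H2.
    * by move=> s1 s2 /= -> ->.
    * by move=> s1 s /= H1 H2; rewrite mem_cat H2 orbT (disjointFr dis H1).
    * move=> s1 s /= H1 H2; rewrite mem_cat H2 /= (disjointFr dis H1) maxsub_out //.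
      by rewrite (disjointFl dis H2).
    * by move=> H1 H2; exact: IHb.
- rewrite /=; case/andP => _ wa Ca Hex.
  case: (IH wa Ca Hex) => s1 [s2 [s3 [[S1 S2 A1 A2 H3] G1 G2 G3]]].
  exists s1, s2, s3; case: s3 H3 G1 G2 G3 => [s|] H3 G1 G2 G3; rewrite /TS /=;
    last by split.
  by case/andP: (H3 s erefl) => _ ->; split.
- move=> /= wa Ca Hex.
  case: (IH wa Ca Hex) => s1 [s2 [s3 [[S1 S2 A1 A2 H3] G1 G2 G3]]].
  exists s1, s2, s3; case: s3 H3 G1 G2 G3 => [s|] H3 G1 G2 G3; rewrite /TS /=;
    last by split.
  by case/andP: (H3 s erefl) => _ ->; split.
Qed.

Lemma verts_nonempty x : exists v, v \in cw_verts x.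
Proof.
elim: x => [w l|a [v Hv] b _|i j a IH|i j a IH] //=.
- by exists w; rewrite inE.
- by exists v; rewrite mem_cat Hv.
Qed.

End CWP.

Section Main.
Variables (t : nat) (T : finType) (e : rel T) (x : cwexp T t).
Hypothesis esym : symmetric e.
Hypothesis xb : cw_builds x e.

Definition Aof (N : cwexp T t) : pred T := fun v => v \in cw_verts N.

Definition Mout N (l : 'I_t) c r v := exists m,
  [/\ m <= r, near e (Aof N) (cw_lab N) l c m & far e (Aof N) (cw_lab N) l v (r - m)].
Definition Min N (l : 'I_t) c r v := exists m,
  [/\ m <= r, near e (Aof N) (cw_lab N) l v m & far e (Aof N) (cw_lab N) l c (r - m)].

Lemma splitN N u v n : subt N x -> u \in cw_verts N -> v \notin cw_verts N ->
  (v \in reach e u n) <-> exists l, Mout N l u n v.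
Proof.
move=> HN Hu Hv.
case: xb => wf _ _ E.
have modA : forall z z' w, Aof N z -> Aof N z' -> cw_lab N z = cw_lab N z' -> ~~ Aof N w ->
    e z w = e z' w.
  move=> z z' w Hz Hz' Hl Hw.
  case: (module wf HN Hz Hz' Hl) => _ H.
  by rewrite -!E H.
have labA : forall z, Aof N z -> cw_lab N z != None.
  by move=> z /verts_lab [l ->].
rewrite (split_reach modA labA n Hu Hv).
split; first by case=> l [m H]; exists l, m.
by case=> l [m H]; exists l, m.
Qed.

Lemma splitN' N u v n : subt N x -> u \in cw_verts N -> v \notin cw_verts N ->
  (u \in reach e v n) <-> exists l, Min N l v n u.
Proof.
move=> HN Hu Hv.
have -> : (u \in reach e v n) <-> (v \in reach e u n).
  by split; apply: reach_sym.
exact: splitN.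
Qed.

Definition K := 4 * t + 3.

Definition Valid (w : seq (option T)) (c : T) (r : nat) : Prop :=
  match nth None w 0 with
  | None => match nth None w 1, nth None w 2 with
            | Some c0, Some x0 =>
               [/\ c = c0, x0 \in reach e c r & forall n, x0 \in reach e c n -> r <= n]
            | _, _ => False end
  | Some s1 =>
     let N1 := node1 x s1 (nth None w 2) in
     let N2 := lca x s1 (odflt s1 (nth None w 1)) in
     [/\ c \in cw_verts N1, c \notin cw_verts N2 &
      forall l : 'I_t,
        [/\ forall v, nth None w (3 + l) = Some v -> Mout N1 l c r v,
            forall v, nth None w (3 + t + l) = Some v -> v \notin reach e c r,
            forall v, nth None w (3 + 2*t + l) = Some v -> Min N2 l c r v &
            forall v, nth None w (3 + 3*t + l) = Some v -> v \notin reach e c r]]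
  end.

Definition rho (w : K.-tuple (option T)) : {set T} :=
  match epsilon (inhabits None) (fun o : option (T * nat) =>
      match o with Some (c, r) => Valid w c r | None => ~ exists c r, Valid w c r end) with
  | Some (c, r) => reach e c r
  | None => set0
  end.

Lemma rho_cases (w : K.-tuple (option T)) : ((~ exists c r, Valid w c r) /\ rho w = set0) \/ exists c r, Valid w c r /\ rho w = reach e c r.
Proof.
rewrite /rho.
set P := (fun o : option (T * nat) => _).
have : P (epsilon (inhabits None) P).
  apply: epsilon_spec.
  case: (classic (exists c r, Valid w c r)) => [[c [r H]]|H].
    by exists (Some (c, r)).
  by exists None.
case: (epsilon _ P) => [[c r]|] /= H; last by left; split.
by right; exists c, r.
Qed.

Lemma realizesI (B Xp Xm : {set T}) : (forall v, v \in Xp -> v \in B) ->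
  (forall v, v \in Xm -> v \notin B) -> realizes B Xp Xm.
Proof.
move=> H1 H2; rewrite /realizes; apply/andP; split; first by apply/subsetP.
apply/pred0P => v /=; apply/negbTE/negP => /andP [H3 H4].
by move: (H2 _ H4); rewrite H3.
Qed.

Lemma rho_ok (w : K.-tuple (option T)) (Xp Xm : {set T}) : (exists c r, Valid w c r) ->
  (forall c r, Valid w c r -> realizes (reach e c r) Xp Xm) -> realizes (rho w) Xp Xm.
Proof.
move=> Hex Hall; case: (rho_cases w) => [[H _]|[c [r [H ->]]]]; last exact: Hall.
by case: H.
Qed.

Definition mk (f : nat -> option T) : K.-tuple (option T) := [tuple f i | i < K].

Lemma slot_mk f k : k < K -> nth None (mk f) k = f k.
Proof. by move=> Hk; rewrite (nth_mktuple _ _ (Ordinal Hk)). Qed.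

Lemma mem_mk f o : o \in mk f -> exists2 k, k < K & o = f k.
Proof. by case/tnthP => i ->; exists i => //; rewrite tnth_mktuple. Qed.


Lemma Kxo (l : 'I_t) : 3 + l < K. Proof. by rewrite /K; have := ltn_ord l; lia. Qed.
Lemma Kyo (l : 'I_t) : 3 + t + l < K. Proof. by rewrite /K; have := ltn_ord l; lia. Qed.
Lemma Kxi (l : 'I_t) : 3 + 2 * t + l < K. Proof. by rewrite /K; have := ltn_ord l; lia. Qed.
Lemma Kyi (l : 'I_t) : 3 + 3 * t + l < K. Proof. by rewrite /K; have := ltn_ord l; lia. Qed.

Lemma K2lt : 2 < K. Proof. by rewrite /K; lia. Qed.

Definition okopt (Xp Xm : {set T}) (o : option T) :=
  match o with None => true | Some v => (v \in Xp) || (v \in Xm) end.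

Definition Good (Xp Xm : {set T}) (w : K.-tuple (option T)) :=
  (forall o, o \in w -> okopt Xp Xm o) /\ realizes (rho w) Xp Xm.

Lemma case_empty (Xp Xm : {set T}) : (forall v, v \notin Xp) -> exists w, Good Xp Xm w.
Proof.
move=> H; exists (mk (fun _ => None)); split.
  by move=> o /mem_mk [k _ ->].
have K1 : 1 < K by rewrite /K; lia.
case: (rho_cases (mk (fun _ => None))) => [[_ ->]|[c [r [Hv _]]]].
  apply: realizesI => v; first by rewrite (negbTE (H v)).
  by rewrite inE.
by move: Hv; rewrite /Valid !slot_mk //; lia.
Qed.

Lemma case_center (Xp Xm : {set T}) c n : Xp \subset reach e c n ->
  [disjoint Xm & reach e c n] -> c \in Xp -> exists w, Good Xp Xm w.
Proof.
move=> Hp Hm Cp.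
have Fm : forall v a b, a <= b -> (fun v j => v \in reach e c j) v a ->
    (fun v j => v \in reach e c j) v b.
  by move=> v a b Hab /=; apply: reach_mono.
case: (ple_max Fm (fun v => v \in Xp)) => o [o1 o2].
case: (o2 c Cp) => xs Ho _.
have Xs : xs \in Xp by apply: o1; rewrite Ho.
pose f := fun k => if k == 1 then Some c else if k == 2 then Some xs else None.
exists (mk f); split.
  move=> o' /mem_mk [k _ ->]; rewrite /f /okopt; case: ifP => _; first by rewrite Cp.
  by case: ifP => _ //; rewrite Xs.
have K0 : 0 < K by rewrite /K; lia.
have K1 : 1 < K by rewrite /K; lia.
have K2 : 2 < K by rewrite /K; lia.
have V : forall c' r, Valid (mk f) c' r <->
    [/\ c' = c, xs \in reach e c' r & forall m, xs \in reach e c' m -> r <= m].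
  by move=> c' r; rewrite /Valid !slot_mk.
apply: rho_ok.
  have Ex : exists m, xs \in reach e c m by exists n; apply: (subsetP Hp).
  exists c, (ex_minn Ex); apply/V; case: ex_minnP => m Hm1 Hm2; split => //.
move=> c' r /V [-> Hx Hmin]; apply: realizesI => v Hv.
  by case: (o2 v Hv) => m; rewrite Ho => -[<-] /(_ r Hx).
apply/negP => Hr.
have Hrn := Hmin n (subsetP Hp _ Xs).
have := reach_mono Hrn Hr.
by rewrite (disjointFr Hm Hv).
Qed.

Definition gsel (j : nat) (h : 'I_t -> option T) : option T :=
  if (insub j : option 'I_t) is Some l then h l else None.

Definition fgen (s1 s2 : T) (s3 : option T) (Xo Yo Xi Yi : 'I_t -> option T) (k : nat) :=
  if k == 0 then Some s1 else if k == 1 then Some s2 else if k == 2 then s3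
  else if k < 3 + t then gsel (k - 3) Xo
  else if k < 3 + 2 * t then gsel (k - (3 + t)) Yo
  else if k < 3 + 3 * t then gsel (k - (3 + 2 * t)) Xi
  else gsel (k - (3 + 3 * t)) Yi.

Ltac skipif := case: ifP => [?|_]; [exfalso; lia|].
Ltac takeif := case: ifP => [_|?]; [|exfalso; lia].

Section FG.
Variables (s1 s2 : T) (s3 : option T) (Xo Yo Xi Yi : 'I_t -> option T).
Let f := fgen s1 s2 s3 Xo Yo Xi Yi.

Lemma fg_xo (l : 'I_t) : f (3 + l) = Xo l.
Proof.
have := ltn_ord l; move=> Hl.
rewrite /f /fgen; repeat skipif; try takeif.
have E : 3 + l - 3 = l by lia.
by rewrite E /gsel valK.
Qed.
Lemma fg_yo (l : 'I_t) : f (3 + t + l) = Yo l.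
Proof.
have := ltn_ord l; move=> Hl.
rewrite /f /fgen; repeat skipif; try takeif.
have E : 3 + t + l - (3 + t) = l by lia.
by rewrite E /gsel valK.
Qed.
Lemma fg_xi (l : 'I_t) : f (3 + 2 * t + l) = Xi l.
Proof.
have := ltn_ord l; move=> Hl.
rewrite /f /fgen; repeat skipif; try takeif.
have E : 3 + 2 * t + l - (3 + 2 * t) = l by lia.
by rewrite E /gsel valK.
Qed.
Lemma fg_yi (l : 'I_t) : f (3 + 3 * t + l) = Yi l.
Proof.
have := ltn_ord l; move=> Hl.
rewrite /f /fgen; repeat skipif.
have E : 3 + 3 * t + l - (3 + 3 * t) = l by lia.
by rewrite E /gsel valK.
Qed.

Lemma fg_ok (P : T -> Prop) : P s1 -> P s2 -> (forall v, s3 = Some v -> P v) ->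
  (forall l v, Xo l = Some v -> P v) -> (forall l v, Yo l = Some v -> P v) ->
  (forall l v, Xi l = Some v -> P v) -> (forall l v, Yi l = Some v -> P v) ->
  forall k v, f k = Some v -> P v.
Proof.
move=> H1 H2 H3 H4 H5 H6 H7 k v.
have Hg : forall h j, (forall l v, h l = Some v -> P v) -> gsel j h = Some v -> P v.
  by move=> h j Hh; rewrite /gsel; case: insub => [l|] // /Hh.
rewrite /f /fgen; case: ifP => _; first by case=> <-.
case: ifP => _; first by case=> <-.
case: ifP => _; first exact: H3.
case: ifP => _; first exact: Hg.
case: ifP => _; first exact: Hg.
case: ifP => _; exact: Hg.
Qed.
End FG.

Lemma case_general (Xp Xm : {set T}) c n : Xp \subset reach e c n ->
  [disjoint Xm & reach e c n] -> c \notin Xp -> (exists v, v \in Xp) ->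
  exists w, Good Xp Xm w.
Proof.
move=> Hp Hm Cp [v0 V0].
case: (xb) => wf _ allv _.
pose S := Xp :|: Xm.
have CS : c \notin S.
  by rewrite inE negb_or Cp /= (disjointFl Hm (reach_self _ _ _)).
have Ex0 : exists v, v \in S /\ v \in cw_verts x.
  by exists v0; rewrite inE V0 allv.
have [s1 [s2 [s3 [[S1 S2 X1 X2 H3] G1 G2 G3]]]] := tree_split wf (allv c) CS Ex0.
pose N1 := node1 x s1 s3.
pose N2 := lca x s1 s2.
have sub1 : subt N1 x := node1_subt _ _ _.
have sub2 : subt N2 x := lca_subt _ _ _.
pose QXo := fun (l : 'I_t) (o : option T) =>
   (forall v, o = Some v -> [/\ v \in Xp, v \notin cw_verts N1 & Mout N1 l c n v]) /\
   (forall v, [/\ v \in Xp, v \notin cw_verts N1 & Mout N1 l c n v] ->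
      exists2 m, o = Some m & ple (fun v j => far e (Aof N1) (cw_lab N1) l v j) v m).
have [Xo HXo] : exists Xo : 'I_t -> option T, forall l, QXo l (Xo l).
  apply: fin_all_exists => l; rewrite /QXo; apply: ple_max => v a b; exact: far_mono.
pose QYo := fun (l : 'I_t) (o : option T) =>
   (forall v, o = Some v -> v \in Xm /\ v \notin cw_verts N1) /\
   (forall v, v \in Xm /\ v \notin cw_verts N1 ->
      exists2 m, o = Some m & ple (fun v j => far e (Aof N1) (cw_lab N1) l v j) m v).
have [Yo HYo] : exists Yo : 'I_t -> option T, forall l, QYo l (Yo l).
  apply: fin_all_exists => l; rewrite /QYo; apply: ple_min => v a b; exact: far_mono.
pose QXi := fun (l : 'I_t) (o : option T) =>
   (forall v, o = Some v -> [/\ v \in Xp, v \in cw_verts N2 & Min N2 l c n v]) /\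
   (forall v, [/\ v \in Xp, v \in cw_verts N2 & Min N2 l c n v] ->
      exists2 m, o = Some m & ple (fun v j => near e (Aof N2) (cw_lab N2) l v j) v m).
have [Xi HXi] : exists Xi : 'I_t -> option T, forall l, QXi l (Xi l).
  apply: fin_all_exists => l; rewrite /QXi; apply: ple_max => v a b; exact: near_mono.
pose QYi := fun (l : 'I_t) (o : option T) =>
   (forall v, o = Some v -> v \in Xm /\ v \in cw_verts N2) /\
   (forall v, v \in Xm /\ v \in cw_verts N2 ->
      exists2 m, o = Some m & ple (fun v j => near e (Aof N2) (cw_lab N2) l v j) m v).
have [Yi HYi] : exists Yi : 'I_t -> option T, forall l, QYi l (Yi l).
  apply: fin_all_exists => l; rewrite /QYi; apply: ple_min => v a b; exact: near_mono.
pose f := fgen s1 s2 s3 Xo Yo Xi Yi.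
exists (mk f); split.
  move=> o /mem_mk [k _ ->]; rewrite /okopt.
  case Hf: (f k) => [v|] //.
  have HS : forall v, v \in S -> (v \in Xp) || (v \in Xm) by move=> u; rewrite inE.
  apply: (fg_ok (P := fun v => (v \in Xp) || (v \in Xm))) Hf.
  - exact: HS.
  - exact: HS.
  - by move=> u /H3 /andP [/HS].
  - by move=> l u /(proj1 (HXo l)) [-> _ _].
  - by move=> l u /(proj1 (HYo l)) [-> _]; rewrite orbT.
  - by move=> l u /(proj1 (HXi l)) [-> _ _].
  - by move=> l u /(proj1 (HYi l)) [-> _]; rewrite orbT.
have sxo (l : 'I_t) : nth None (mk f) (3 + l) = Xo l.
  rewrite (slot_mk _ (Kxo l)); exact: fg_xo.
have syo (l : 'I_t) : nth None (mk f) (3 + t + l) = Yo l.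
  rewrite (slot_mk _ (Kyo l)); exact: fg_yo.
have sxi (l : 'I_t) : nth None (mk f) (3 + 2 * t + l) = Xi l.
  rewrite (slot_mk _ (Kxi l)); exact: fg_xi.
have syi (l : 'I_t) : nth None (mk f) (3 + 3 * t + l) = Yi l.
  rewrite (slot_mk _ (Kyi l)); exact: fg_yi.
have K2 : 2 < K := K2lt.
have K1 : 1 < K := ltnW K2.
have K0 : 0 < K := ltnW K1.
have V : forall c' r, Valid (mk f) c' r <->
    [/\ c' \in cw_verts N1, c' \notin cw_verts N2 &
      forall l : 'I_t,
        [/\ forall v, Xo l = Some v -> Mout N1 l c' r v,
            forall v, Yo l = Some v -> v \notin reach e c' r,
            forall v, Xi l = Some v -> Min N2 l c' r v &
            forall v, Yi l = Some v -> v \notin reach e c' r]].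
  have f0 : f 0 = Some s1 by [].
  have f1 : f 1 = Some s2 by [].
  have f2 : f 2 = s3 by [].
  move=> c' r; rewrite /Valid (slot_mk _ K0) (slot_mk _ K1) (slot_mk _ K2) f0 f1 f2.
  split => -[A1 A2 A3]; split => // l; case: (A3 l) => B1 B2 B3 B4.
    by split; [rewrite -sxo | rewrite -syo | rewrite -sxi | rewrite -syi].
  by split; [rewrite sxo | rewrite syo | rewrite sxi | rewrite syi].
apply: rho_ok.
  exists c, n; apply/V; split => // l; split.
  - by move=> v /(proj1 (HXo l)) [].
  - by move=> v /(proj1 (HYo l)) [Hv _]; rewrite (disjointFr Hm Hv).
  - by move=> v /(proj1 (HXi l)) [].
  - by move=> v /(proj1 (HYi l)) [Hv _]; rewrite (disjointFr Hm Hv).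
move=> c' r /V [C1 C2 C3]; apply: realizesI => v Hv.
- have Sv : v \in S by rewrite inE Hv.
  have Hr : v \in reach e c n by apply: (subsetP Hp).
  case/orP: (G3 v Sv (allv v)) => [In2|Out1].
  + case: ((splitN' n sub2 In2 G2).1 Hr) => l Ml.
    case: ((proj2 (HXi l)) v (And3 Hv In2 Ml)) => m Hxm Hle.
    case: (C3 l) => _ _ D3 _.
    case: (D3 m Hxm) => k [k1 k2 k3].
    apply/(splitN' r sub2 In2 C2); exists l, k; split => //; exact: Hle.
  + case: ((splitN n sub1 G1 Out1).1 Hr) => l Ml.
    case: ((proj2 (HXo l)) v (And3 Hv Out1 Ml)) => m Hxm Hle.
    case: (C3 l) => D1 _ _ _.
    case: (D1 m Hxm) => k [k1 k2 k3].
    apply/(splitN r sub1 C1 Out1); exists l, k; split => //; exact: Hle.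
- have Sv : v \in S by rewrite inE Hv orbT.
  apply/negP => Hr.
  case/orP: (G3 v Sv (allv v)) => [In2|Out1].
  + case: ((splitN' r sub2 In2 C2).1 Hr) => l [k [k1 k2 k3]].
    case: ((proj2 (HYi l)) v (conj Hv In2)) => m Hym Hle.
    case: ((proj1 (HYi l)) m Hym) => _ In2m.
    case: (C3 l) => _ _ _ D4.
    move: (D4 m Hym) => /negP; apply.
    apply/(splitN' r sub2 In2m C2); exists l, k; split => //; exact: Hle.
  + case: ((splitN r sub1 C1 Out1).1 Hr) => l [k [k1 k2 k3]].
    case: ((proj2 (HYo l)) v (conj Hv Out1)) => m Hym Hle.
    case: ((proj1 (HYo l)) m Hym) => _ Out1m.
    case: (C3 l) => _ D2 _ _.
    move: (D2 m Hym) => /negP; apply.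
    apply/(splitN r sub1 C1 Out1m); exists l, k; split => //; exact: Hle.
Qed.

Lemma good_exists (Xp Xm : {set T}) : is_sample (is_ball e) Xp Xm -> exists w, Good Xp Xm w.
Proof.
case=> B [[c [[n|n'] ->]] [Hp Hm]].
- case: (classic (exists v, v \in Xp)) => [Hne|He]; last first.
    by apply: case_empty => v; apply/negP => Hv; apply: He; exists v.
  case Cp: (c \in Xp).
    exact: (case_center Hp Hm).
  apply: (case_general Hp Hm) => //; by rewrite Cp.
- apply: case_empty => v; apply/negP => Hv.
  by move: (subsetP Hp v Hv); rewrite inE.
Qed.

End Main.
Theorem theorem2p2 (t : nat) (T : finType) (e : rel T) :
  0 < t -> symmetric e -> irreflexive e -> cliquewidth_le e t ->
  has_proper_ASCS (is_ball e) (4 * t + 3).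
Proof.
move=> _ esym _ [x xb].
have [c0 _] := verts_nonempty x.
exists (fun Xp Xm => epsilon (inhabits (mk t (fun _ => None))) (Good e x Xp Xm)).
exists (rho e x); split.
- move=> Xp Xm Hs.
  have := epsilon_spec (inhabits (mk t (fun _ => None))) (Good e x Xp Xm) (good_exists esym xb Hs).
  by case=> H1 H2; split.
- move=> w; case: (rho_cases e x w) => [[_ ->]|[c [r [_ ->]]]].
    by exists c0, (Negz 0).
  by exists c, (Posz r).
Qed.
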